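(* Let $\psi\in C^1(\mathbb{R})$ satisfy: $\psi(0)=1$, $\psi$ is even, there exist $C>0$ and $\delta>1$ with $|\psi(x)|+|x\psi'(x)|\leq C\langle x\rangle^{-\delta}$ for all $x\in\mathbb{R}$, and $A_\psi:=\int_{\mathbb{R}}\psi(x)\,\mathrm{d}x\neq 0$. Let $\mu$ be a probability measure on $\mathbb{R}$ and $0\le\alpha\le 1$. Then $C^\alpha_{\mu,\psi}(x)$ is finite for any $x$ for which $D^\alpha_\mu(x)$ is finite; and, if $\psi$ is non-negative, then for each $x$, $C^\alpha_{\mu,\psi}(x)$ and $D^\alpha_\mu(x)$ are both finite or both infinite.
   Context: $\langle x\rangle=(1+x^2)^{1/2}$. For $a>0$, $\psi_a(x)=\psi(x/a)$ and $(\psi_a*\mu)(x)=\int\psi_a(x-y)\,\mathrm{d}\mu(y)$. Define $C^\alpha_{\mu,\psi}(x)=\limsup_{a\to0}\frac{(\psi_a*\mu)(x)}{a^\alpha}$ and $D^\alpha_\mu(x)=\limsup_{\varepsilon\to0}\frac{\mu((x-\varepsilon,x+\varepsilon))}{(2\varepsilon)^\alpha}$ (limits over positive $a,\varepsilon$). *)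

(* Defs.v *)
From HB Require Import structures.
From mathcomp Require Import all_boot all_order all_algebra.
From mathcomp Require Import all_classical all_reals all_analysis.
Set Implicit Arguments. Unset Strict Implicit. Unset Printing Implicit Defensive.
Import Order.TTheory GRing.Theory Num.Theory.
Import numFieldNormedType.Exports.
Local Open Scope classical_set_scope.
Local Open Scope ring_scope.

Definition jbr {R : realType} (x : R) : R := Num.sqrt (1 + x ^+ 2).

Definition conv_scaled {R : realType} (psi : R -> R)
  (mu : probability R R) (a x : R) : \bar R :=
  (\int[mu]_y (psi ((x - y) / a))%:E)%E.

Definition Calpha {R : realType} (alpha : R) (mu : probability R R)
  (psi : R -> R) (x : R) : \bar R :=
  limf_esup (fun a : R => (conv_scaled psi mu a x * ((a `^ alpha)^-1)%:E)%E)
    (0^'+).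

Definition Dalpha {R : realType} (alpha : R) (mu : probability R R)
  (x : R) : \bar R :=
  limf_esup (fun e : R =>
      (mu [set` `]x - e, x + e[%R] * (((2 * e) `^ alpha)^-1)%:E)%E)
    (0^'+).

(* Main.v *)
Require Import Defs.
From HB Require Import structures.
From mathcomp Require Import all_boot all_order all_algebra.
From mathcomp Require Import all_classical all_reals all_analysis.
From mathcomp Require Import measurable_realfun.
From mathcomp Require Import ring lra.
Import Order.TTheory GRing.Theory Num.Theory.
Import numFieldNormedType.Exports.
Local Open Scope classical_set_scope.
Local Open Scope ring_scope.
Section LS.
Local Open Scope ereal_scope.
Context {R : realType}.

Lemma limsup_le_near (f : R -> \bar R) (F : set_system R) (M : \bar R) :
  (\forall y \near F, f y <= M) -> limf_esup f F <= M.
Proof.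
move=> FV; rewrite limf_esupE; apply: ge_ereal_inf.
exists (ereal_sup (f @` [set y | f y <= M])); first by exists [set y | f y <= M].
by apply/ereal_supP => _ [y yV <-].
Qed.

Lemma limsup_ge_near (f : R -> \bar R) (F : set_system R) (M : \bar R) :
  ProperFilter F ->
  (\forall y \near F, M <= f y) -> M <= limf_esup f F.
Proof.
move=> PF FV; rewrite limf_esupE; apply/ereal_infP => _ [V FV' <-].
have [y [Vy My]] : exists y, V y /\ M <= f y.
  have : F (V `&` [set y | M <= f y]) by apply: filterI.
  by case/filter_ex => y [? ?]; exists y.
by apply: le_trans My _; apply: ereal_sup_ubound; exists y.
Qed.

Lemma limsup_fin_near (f : R -> \bar R) (F : set_system R) : Filter F ->
  limf_esup f F < +oo -> exists M : R, \forall y \near F, f y <= M%:E.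
Proof.
move=> FF; rewrite limf_esupE => /ereal_inf_ltP[_ [V FV <-]] sV.
move: sV; case E: (ereal_sup (f @` V)) => [r| |] // _.
- exists r; apply: filterS FV => y Vy; rewrite -E; apply: ereal_sup_ubound; by exists y.
- exists 0%R; apply: filterS FV => y Vy.
  have : f y <= -oo by rewrite -E; apply: ereal_sup_ubound; exists y.
  by rewrite leeNy_eq => /eqP ->; rewrite leNye.
Qed.
End LS.
Lemma near_right0 {R : realType} (P : R -> Prop) :
  (\forall a \near 0^'+, P a) <-> exists2 e : R, 0 < e & forall a, 0 < a < e -> P a.
Proof.
split.
- move=> /nbhs_ballP[e /= e0 H]; exists e => // a /andP[a0 ae].
  apply: H => //; rewrite /ball /= sub0r normrN gtr0_norm //.
- move=> [e e0 H]; apply/nbhs_ballP; exists e => //= a.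
  rewrite /ball /= sub0r normrN => ae a0; apply: H; rewrite a0 /=.
  by rewrite gtr0_norm in ae.
Qed.

Lemma powR_lt1_neg {R : realType} (b s : R) : 1 < b -> s < 0 -> b `^ s < 1.
Proof.
move=> b1 s0; rewrite /powR gt_eqF ?(lt_trans ltr01 b1)// expR_lt1.
by rewrite nmulr_rlt0 // ln_gt0.
Qed.

Definition Itv {R : realType} (x e : R) : set R := [set` `]x - e, x + e[%R].

Lemma in_Itv {R : realType} (x e y : R) : Itv x e y <-> `|x - y| < e.
Proof. by rewrite /Itv /= in_itv /= ltr_distlC. Qed.

Lemma mItv {R : realType} (x e : R) : measurable (Itv x e).
Proof. exact: measurable_itv. Qed.

Lemma ballbound {R : realType} (mu : probability R R) (alpha x : R) :
  0 <= alpha -> Dalpha alpha mu x \is a fin_num ->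
  exists2 K : R, 0 <= K & forall e, 0 < e -> (mu (Itv x e) <= (K * e `^ alpha)%:E)%E.
Proof.
move=> a0; rewrite fin_numElt => /andP[_ /limsup_fin_near] [M /near_right0[e0 e00 H]].
exists (Num.max (M * 2 `^ alpha) ((e0 `^ alpha)^-1)).
  by rewrite le_max invr_ge0 powR_ge0 orbT.
move=> e e0p.
have mfin : mu (Itv x e) \is a fin_num by rewrite ge0_fin_numE ?measure_ge0// (le_lt_trans (probability_le1 _ (mItv _ _)))// ltey.
have [ee0|ee0] := ltP e e0.
- have := H e; rewrite e0p ee0 => /(_ isT).
  rewrite -(fineK mfin) -EFinM !lee_fin => h.
  have p2e : 0 < (2 * e) `^ alpha by rewrite powR_gt0 // mulr_gt0.
  rewrite -(ler_pM2r p2e) -mulrA mulVf ?gt_eqF// mulr1 in h.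
  apply: (le_trans h); rewrite (powRM _ (ler0n _ 2) (ltW e0p)) mulrA.
  by apply: ler_wpM2r; rewrite ?powR_ge0// le_max lexx.
- apply: (le_trans (probability_le1 _ (mItv _ _))); rewrite lee_fin.
  apply: (@le_trans _ _ ((e0 `^ alpha)^-1 * e `^ alpha)); last first.
    by apply: ler_wpM2r; rewrite ?powR_ge0// le_max lexx orbT.
  rewrite mulrC ler_pdivlMr ?powR_gt0// mul1r.
  by apply: ge0_ler_powR => //; rewrite nnegrE ltW // (lt_le_trans e00 ee0).
Qed.
Lemma jbr_ge1 {R : realType} (t : R) : 1 <= jbr t.
Proof. by rewrite /jbr -{1}sqrtr1 ler_sqrt ?lerDl ?sqr_ge0 // addr_ge0 ?sqr_ge0. Qed.
Lemma jbr_ge_abs {R : realType} (t : R) : `|t| <= jbr t.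
Proof. by rewrite /jbr -sqrtr_sqr ler_sqrt ?lerDr // addr_ge0 ?sqr_ge0. Qed.

Lemma jbr_pow_le1 {R : realType} (t d : R) : 0 <= d -> jbr t `^ (- d) <= 1.
Proof.
move=> d0; rewrite powRN invf_le1 ?powR_gt0 ?(lt_le_trans ltr01 (jbr_ge1 t))//.
by rewrite -(powRr0 (jbr t)) ler_powR ?jbr_ge1.
Qed.

Lemma two_pow_nat {R : realType} (j : nat) (d : R) :
  (2 ^+ j : R) `^ d = (2 `^ d) ^+ j.
Proof.
by rewrite -powR_mulrn ?ler0n// -powRrM mulrC powRrM powR_mulrn// powR_ge0.
Qed.

Lemma shell {R : realType} (t d : R) : 0 < d ->
  exists k : nat, `|t| < 2 ^+ k /\
     jbr t `^ (- d) <= (2 `^ (- d)) ^+ k / 2 `^ (- d).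
Proof.
move=> d0; set q := 2 `^ (- d).
have q0 : 0 < q by rewrite powR_gt0.
have q1 : q <= 1 by rewrite ltW // powR_lt1_neg ?ltr1n // oppr_lt0.
have ex : exists n, `|t| < 2 ^+ n.
  exists (Num.Def.archi_bound `|t|).
  apply: (lt_le_trans (archi_boundP (normr_ge0 t))).
  by rewrite -natrX ler_nat ltnW // ltn_expl.
case: (ex_minnP ex) => k tk kmin; exists k; split => //.
case: k tk kmin => [|j] tk kmin.
  rewrite expr0 mul1r; apply: le_trans (jbr_pow_le1 t d (ltW d0)) _.
  by rewrite invf_ge1.
rewrite exprS mulrC mulrA mulVf ?gt_eqF // mul1r.
have jt : 2 ^+ j <= `|t| by rewrite leNgt; apply/negP => /kmin; rewrite ltnn.
rewrite /q -two_pow_nat !powRN lef_pV2 ?posrE ?powR_gt0 ?exprn_gt0 //.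
  apply: ge0_ler_powR; rewrite ?nnegrE ?(ltW d0) ?exprn_ge0 //.
  - exact: (le_trans (normr_ge0 t) (jbr_ge_abs t)).
  - exact: (le_trans jt (jbr_ge_abs t)).
exact: (lt_le_trans ltr01 (jbr_ge1 t)).
Qed.
Lemma geo_le {R : realType} (rho : R) : 0 < rho -> rho < 1 ->
  (\sum_(k <oo) (rho ^+ k)%:E <= ((1 - rho)^-1)%:E)%E.
Proof.
move=> r0 r1; apply: lime_le.
  by apply: is_cvg_nneseries => n _ _; rewrite lee_fin exprn_ge0 // ltW.
apply: nearW => n; rewrite sumEFin lee_fin.
have := geometric_le_lim n (@ler01 R) r0; rewrite gtr0_norm // => /(_ r1).
by rewrite mul1r /series /=; under eq_bigr do rewrite mul1r.
Qed.
Lemma intbound {R : realType} (mu : probability R R) (psi : R -> R)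
  (C delta alpha x K : R) :
  measurable_fun setT psi -> 0 < C -> alpha < delta -> 0 <= alpha -> 0 <= K ->
  (forall t, `|psi t| <= C * jbr t `^ (- delta)) ->
  (forall e, 0 < e -> (mu (Itv x e) <= (K * e `^ alpha)%:E)%E) ->
  exists M : R, forall a, 0 < a ->
    (\int[mu]_y (`|psi ((x - y) / a)|)%:E <= (M * a `^ alpha)%:E)%E.
Proof.
move=> mpsi C0 ad a0 K0 hpsi hmu.
have d0 : 0 < delta := le_lt_trans a0 ad.
set q := 2 `^ (- delta).
have q0 : 0 < q by rewrite powR_gt0.
set rho := q * 2 `^ alpha.
have rho0 : 0 < rho by rewrite mulr_gt0 ?powR_gt0.
have rho1 : rho < 1.
  rewrite /rho /q -powRD; last by rewrite pnatr_eq0 implybT.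
  by apply: powR_lt1_neg; rewrite ?ltr1n // addrC subr_lt0.
exists (C / q * K * (1 - rho)^-1) => a a0'.
pose c := fun k : nat => C / q * q ^+ k.
have c0 : forall k, 0 <= c k.
  by move=> k; rewrite /c mulr_ge0 ?divr_ge0 ?exprn_ge0 ?ltW.
pose f : nat -> R -> \bar R := fun (k : nat) (y : R) => (c k * \1_(Itv x (2 ^+ k * a)) y)%:E.
have mf : forall k, measurable_fun [set: R] (f k).
  move=> k; apply/measurable_EFinP; apply: measurable_funM.
    exact: measurable_cst.
  exact: measurable_indic (mItv _ _).
have f0 : forall k y, setT y -> (0 <= f k y)%E.
  by move=> k y _; rewrite lee_fin mulr_ge0 // indicE; case: (_ \in _).
apply: (@le_trans _ _ (\int[mu]_y \sum_(k <oo) f k y)%E).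
  apply: ge0_le_integral => //.
  - apply/measurable_EFinP; apply: measurableT_comp; first exact: normr_measurable.
    apply: measurableT_comp => //; apply: measurable_funM => //.
    apply: measurable_funB => //.
  - have := @ge0_emeasurable_sum _ _ _ setT f xpredT (fun k y _ _ => f0 k y I) (fun k _ => mf k). exact.
  move=> y _; have [k [tk hk]] := shell ((x - y) / a) delta d0.
  apply: (@le_trans _ _ (f k y)).
    rewrite /f indicE mem_set; last first.
      apply/in_Itv; move: tk; rewrite normrM normfV (gtr0_norm a0').
      by rewrite ltr_pdivrMr.
    rewrite mulr1 lee_fin; apply: le_trans (hpsi _) _.
    rewrite /c -mulrA [q^-1 * _]mulrC; apply: ler_wpM2l; [exact: ltW | exact: hk].
  apply: le_trans (nneseries_lim_ge k.+1 _); last by move=> n _ _; exact: f0.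
  rewrite big_nat_recr //=; apply: lee_paddl => //.
  by apply: sume_ge0 => i _; exact: f0.
rewrite integral_nneseries //.
have hint : forall k, (\int[mu]_y f k y = (c k)%:E * mu (Itv x (2 ^+ k * a)))%E.
  move=> k; rewrite /f (integralZl_indic _ (fun _ => Itv x (2 ^+ k * a))) //.
  - by rewrite integral_indic // ?setIT //; exact: mItv.
  - by move=> ck; have := c0 k; rewrite leNgt ck.
  - exact: mItv.
have b0 : 0 <= C / q * K * a `^ alpha.
  by rewrite !mulr_ge0 ?powR_ge0 ?invr_ge0 // ltW.
apply: (@le_trans _ _ (\sum_(k <oo) ((C / q * K * a `^ alpha)%:E * (rho ^+ k)%:E))%E).
  apply: lee_nneseries => k _.
    by move=> _; apply: integral_ge0 => y _; exact: f0.
  rewrite hint; apply: le_trans (lee_wpmul2l _ (hmu _ _)) _.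
  - by rewrite lee_fin.
  - by rewrite mulr_gt0 // exprn_gt0.
  rewrite -!EFinM lee_fin le_eqVlt; apply/orP; left; apply/eqP.
  rewrite (powRM _ (exprn_ge0 _ (ler0n _ 2)) (ltW a0')) two_pow_nat /rho /c exprMn.
  ring.
rewrite nneseriesZl; last by move=> i _; rewrite lee_fin exprn_ge0 // ltW.
apply: le_trans (lee_wpmul2l _ (geo_le rho rho0 rho1)) _; first by rewrite lee_fin.
rewrite -EFinM lee_fin le_eqVlt; apply/orP; left; apply/eqP; ring.
Qed.
Lemma lowbound {R : realType} (mu : probability R R) (psi : R -> R) (x : R) :
  continuous psi -> psi 0 = 1 -> (forall t, 0 <= psi t) ->
  exists2 r : R, 0 < r & forall a, 0 < a ->
    ((2^-1)%:E * mu (Itv x (r * a)) <= conv_scaled psi mu a x)%E.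
Proof.
move=> psic psi0 psige0.
have mpsi := continuous_measurable_fun psic.
have h2 : (0:R) < 2^-1 by rewrite invr_gt0.
have := @cvgr_dist_lt _ _ _ (nbhs (0:R)) _ psi (psi 0) (psic 0) (2^-1) h2.
case=> r /= r0 hr; exists r => // a a0.
rewrite /conv_scaled.
have -> : mu (Itv x (r * a)) = (\int[mu]_y (\1_(Itv x (r * a)) y)%:E)%E.
  by rewrite integral_indic ?setIT //; exact: mItv.
rewrite -(integralZl_indic _ (fun _ => Itv x (r * a))) //; last first.
  exact: mItv.
  by move=> h; move: h; rewrite ltNge invr_ge0 ler0n.
apply: ge0_le_integral => //.
- apply/measurable_EFinP; apply: measurable_funM; first exact: measurable_cst.
  exact: measurable_indic (mItv _ _).
- apply/measurable_EFinP; apply: measurableT_comp => //; apply: measurable_funM => //.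
  exact: measurable_funB.
move=> y _; rewrite lee_fin indicE.
case: (boolP (y \in Itv x (r * a))) => [/set_mem/in_Itv yI|_]; last by rewrite mulr0.
rewrite mulr1.
have : `|psi 0 - psi ((x - y) / a)| < 2^-1.
  apply: hr; rewrite /ball /= sub0r normrN normrM normfV (gtr0_norm a0).
  by rewrite ltr_pdivrMr.
rewrite psi0 ltr_distlC => /andP[h _]; apply: ltW; apply: le_lt_trans h.
lra.
Qed.
Lemma part1 {R : realType} (psi : R -> R) (mu : probability R R) (alpha C delta x : R) :
  continuous psi -> 0 < C -> alpha < delta -> 0 <= alpha ->
  (forall t, `|psi t| <= C * jbr t `^ (- delta)) ->
  Dalpha alpha mu x \is a fin_num -> Calpha alpha mu psi x \is a fin_num.
Proof.
move=> psic C0 ad a0 hpsi Dfin.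
have mpsi := continuous_measurable_fun psic.
have [K K0 hK] := ballbound mu alpha x a0 Dfin.
have [M hM] := intbound mu psi C delta alpha x K mpsi C0 ad a0 K0 hpsi hK.
have hb : forall a, 0 < a ->
    ((-M)%:E <= conv_scaled psi mu a x * ((a `^ alpha)^-1)%:E <= M%:E)%E.
  move=> a a00.
  have s0 : 0 < a `^ alpha by rewrite powR_gt0.
  have hm : measurable_fun [set: R] (fun y => (psi ((x - y) / a))%:E).
    apply/measurable_EFinP; apply: measurableT_comp => //; apply: measurable_funM => //.
    exact: measurable_funB.
  have := le_abse_integral mu measurableT hm.
  move=> /le_trans /(_ (hM a a00)); rewrite /conv_scaled.
  case: (\int[mu]_y (psi ((x - y) / a))%:E)%E => [c| |] //= hc.
  rewrite -EFinM !lee_fin -ler_norml normrM normfV (gtr0_norm s0).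
  by rewrite ler_pdivrMr.
rewrite fin_numElt; apply/andP; split.
- apply: (@lt_le_trans _ _ (-M)%:E); first exact: ltNyr.
  apply: limsup_ge_near.
  apply/near_right0; exists 1 => // a /andP[a00 _].
  by have /andP[] := hb a a00.
- apply: (@le_lt_trans _ _ M%:E); last exact: ltry.
  apply: limsup_le_near.
  apply/near_right0; exists 1 => // a /andP[a00 _].
  by have /andP[] := hb a a00.
Qed.
Lemma part2 {R : realType} (psi : R -> R) (mu : probability R R) (alpha x : R) :
  continuous psi -> psi 0 = 1 -> (forall t, 0 <= psi t) -> 0 <= alpha ->
  Calpha alpha mu psi x \is a fin_num -> Dalpha alpha mu x \is a fin_num.
Proof.
move=> psic psi0 psige a0 Cfin.
have [r r0 hr] := lowbound mu psi x psic psi0 psige.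
move: Cfin; rewrite fin_numElt => /andP[_ /limsup_fin_near] [M /near_right0[e1 e10 H]].
rewrite fin_numElt; apply/andP; split.
- apply: (@lt_le_trans _ _ 0%E); first exact: ltNy0.
  apply: limsup_ge_near; apply: nearW => e.
  by apply: mule_ge0 => //; rewrite lee_fin invr_ge0 powR_ge0.
- apply: (@le_lt_trans _ _ (2 * M / (2 * r) `^ alpha)%:E); last exact: ltry.
  apply: limsup_le_near; apply/near_right0; exists (r * e1).
    by rewrite mulr_gt0.
  move=> e /andP[e0 ee1].
  set a := e / r.
  have a00 : 0 < a by rewrite divr_gt0.
  have ae1 : a < e1 by rewrite /a ltr_pdivrMr // mulrC.
  have ea : e = r * a by rewrite /a mulrC divfK // gt_eqF.
  have s0 : 0 < a `^ alpha by rewrite powR_gt0.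
  have hF := H a; rewrite a00 ae1 /= in hF; have {}hF := hF isT.
  have hc : (conv_scaled psi mu a x <= (M * a `^ alpha)%:E)%E.
    have := lee_wpmul2r (x := (a `^ alpha)%:E) _ hF.
    rewrite lee_fin (ltW s0) => /(_ isT).
    by rewrite -muleA -EFinM mulVf ?gt_eqF // mule1 -EFinM.
  have hl := le_trans (hr a a00) hc.
  have mfin : mu (Itv x (r * a)) \is a fin_num.
    by rewrite ge0_fin_numE ?measure_ge0// (le_lt_trans (probability_le1 _ (mItv _ _)))// ltey.
  set m := fine (mu (Itv x (r * a))).
  have hm : mu (Itv x (r * a)) = m%:E by rewrite /m fineK.
  move: hl; rewrite hm -EFinM lee_fin => hl.
  rewrite ea -/(Itv x (r * a)) hm -EFinM lee_fin.
  rewrite mulrA (powRM _ (mulr_ge0 (ler0n _ 2) (ltW r0)) (ltW a00)).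
  set S := (2 * r) `^ alpha; set s := a `^ alpha in s0 hl *.
  have S0 : 0 < S by rewrite powR_gt0 // mulr_gt0.
  rewrite invfM [S^-1 * _]mulrC mulrA; apply: ler_wpM2r; first by rewrite invr_ge0 ltW.
  rewrite ler_pdivrMr //; lra.
Qed.

Theorem theorem2p9 (R : realType) (psi : R -> R)
  (psi_derivable : forall x : R, derivable psi x 1)
  (psi'_cont : continuous (derive1 psi))
  (psi0 : psi 0 = 1)
  (psi_even : forall x : R, psi (- x) = psi x)
  (psi_decay : exists C delta : R, 0 < C /\ 1 < delta /\
     forall x : R, `|psi x| + `|x * derive1 psi x| <= C * (jbr x) `^ (- delta))
  (A_psi_neq0 : (\int[lebesgue_measure]_x (psi x)%:E)%E != 0%E)
  (mu : probability R R) (alpha : R) (alpha_ge0 : 0 <= alpha)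
  (alpha_le1 : alpha <= 1) :
  (forall x : R, Dalpha alpha mu x \is a fin_num ->
                 Calpha alpha mu psi x \is a fin_num) /\
  ((forall x : R, 0 <= psi x) ->
   forall x : R, (Calpha alpha mu psi x \is a fin_num <->
                  Dalpha alpha mu x \is a fin_num)).
Proof.
have psic : continuous psi.
  move=> t; apply: differentiable_continuous; apply/derivable1_diffP.
  exact: psi_derivable.
have [C [delta [C0 [d1 hdec]]]] := psi_decay.
have hpsi : forall t, `|psi t| <= C * jbr t `^ (- delta).
  by move=> t; apply: le_trans (hdec t); rewrite lerDl normr_ge0.
have ad : alpha < delta by apply: le_lt_trans d1.
have P1 : forall x, Dalpha alpha mu x \is a fin_num ->
    Calpha alpha mu psi x \is a fin_num.
  by move=> x; exact: (part1 psi mu alpha C delta x psic C0 ad alpha_ge0 hpsi).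
split => // pos x; split; last exact: P1.
exact: (part2 psi mu alpha x psic psi0 pos alpha_ge0).
Qed.
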